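(* Let $A,B,C$ be projective cameras with distinct centers, and let $\pi$ be a correspondence of one of the types PLL, LLL, PPL, PLP, PPP for $(A,B,C)$. Assume $\pi$ avoids epipoles, i.e. every image point of $\pi$ in the view of camera $i$ is different from both epipoles in view $i$, and every image line of $\pi$ in view $i$ contains neither epipole in view $i$. If $\pi$ lies in the corresponding multi-view variety $X^{\ast}_{A,B,C}$, then $\pi$ is consistent with $(A,B,C)$.
   Context: A projective camera is a full-rank matrix in $\mathbb{C}^{3\times4}$ up to scalar with center its kernel in $\mathbb{P}^3$; $\alpha,\beta,\gamma$ denote the projections given by $A,B,C$. Epipoles: $e_{1\leftarrow2}=\alpha(\ker B)$, $e_{1\leftarrow3}=\alpha(\ker C)$ in view 1; $e_{2\leftarrow1}=\beta(\ker A)$, $e_{2\leftarrow3}=\beta(\ker C)$ in view 2; $e_{3\leftarrow1}=\gamma(\ker A)$, $e_{3\leftarrow2}=\gamma(\ker B)$ in view 3. Types: PLL $\in\mathbb{P}^2\times(\mathbb{P}^2)^\vee\times(\mathbb{P}^2)^\vee$, LLL $\in((\mathbb{P}^2)^\vee)^3$, PPL $\in\mathbb{P}^2\times\mathbb{P}^2\times(\mathbb{P}^2)^\vee$, PLP $\in\mathbb{P}^2\times(\mathbb{P}^2)^\vee\times\mathbb{P}^2$, PPP $\in(\mathbb{P}^2)^3$. With $\mathcal{F\ell}_{0,1}=\{(X,L): X\in L\}\subset\mathbb{P}^3\times\mathrm{Gr}(\mathbb{P}^1,\mathbb{P}^3)$, the multi-view variety of each type is the Zariski closure of the image of the rational map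 sending $(X,L)\in\mathcal{F\ell}_{0,1}$ (or $L$ for LLL, $X$ for PPP) to the triple whose $i$-th entry is the image of $X$ under camera $i$ if the $i$-th factor is a point and the image of $L$ if it is a line. $(A,B,C)$ is consistent with $\pi$ if there exist $X\in\mathbb{P}^3$ and a line $L\ni X$ such that each camera maps $X$ (resp. $L$) exactly to the given image point (resp. image line) in its factor, these images being defined. *)

(* Defs.v *)
(* The base field is C = R[i] = complex R for an
   arbitrary R : realType (every realType is a model of the real numbers,
   so R[i] is the field of complex numbers). *)
From HB Require Import structures.
From mathcomp Require Import all_boot all_order all_algebra.
From mathcomp Require Import reals.
From mathcomp Require Import complex.
From mathcomp Require Import mpoly.

Set Implicit Arguments.
Unset Strict Implicit.
Unset Printing Implicit Defensive.

Import Order.TTheory GRing.Theory Num.Theory.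
Local Open Scope ring_scope.

Section ProjDefs.
Variable K : fieldType.

Definition pt_eq (n : nat) (x y : 'cV[K]_n) : Prop :=
  exists k : K, k != 0 /\ x = k *: y.

(* A line of P^3 is represented by a rank-2 matrix L whose two columns
   span it; the point X (a nonzero vector of K^4) lies on L iff X is in the
   column span of L. *)
Definition on_line (L : 'M[K]_(4,2)) (X : 'cV[K]_4) : Prop :=
  exists v : 'cV[K]_2, X = L *m v.

Definition img_pt (P : 'M[K]_(3,4)) (X : 'cV[K]_4) (x : 'cV[K]_3) : Prop :=
  P *m X != 0 /\ pt_eq (P *m X) x.

(* The image of the line L under camera P is defined (it is a line, i.e.
   L does not pass through the center) and equals the image line with dual
   coordinates l (the line {y | l^T y = 0} of P^2). *)
Definition img_line (P : 'M[K]_(3,4)) (L : 'M[K]_(4,2)) (l : 'cV[K]_3) : Prop :=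
  \rank (P *m L) = 2%N /\ l != 0 /\ l^T *m (P *m L) = 0.

End ProjDefs.

Inductive factor_kind := Pt | Ln.

Inductive corr_type := PLL | LLL | PPL | PLP | PPP.

Definition kinds (t : corr_type) : factor_kind * factor_kind * factor_kind :=
  match t with
  | PLL => (Pt, Ln, Ln)
  | LLL => (Ln, Ln, Ln)
  | PPL => (Pt, Pt, Ln)
  | PLP => (Pt, Ln, Pt)
  | PPP => (Pt, Pt, Pt)
  end.

Section MultiView.
Variable K : fieldType.

Definition maps_to (f : factor_kind) (P : 'M[K]_(3,4)) (X : 'cV[K]_4)
    (L : 'M[K]_(4,2)) (x : 'cV[K]_3) : Prop :=
  match f with
  | Pt => img_pt P X x
  | Ln => img_line P L x
  end.

Definition consistent (t : corr_type) (A B C : 'M[K]_(3,4))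
    (x1 x2 x3 : 'cV[K]_3) : Prop :=
  let: (f1, f2, f3) := kinds t in
  exists (X : 'cV[K]_4) (L : 'M[K]_(4,2)),
    [/\ X != 0, \rank L = 2%N & on_line L X] /\
    [/\ maps_to f1 A X L x1, maps_to f2 B X L x2 & maps_to f3 C X L x3].

Definition coords (x1 x2 x3 : 'cV[K]_3) (i : 'I_9) : K :=
  let j : 'I_3 := inord (i %% 3) in
  if (i < 3)%N then x1 j 0 else if (i < 6)%N then x2 j 0 else x3 j 0.

(* The multi-view variety: Zariski closure (in the product of three
   projective planes / dual planes) of the image set, i.e. the set of
   triples of nonzero vectors on which every polynomial vanishing on (the
   affine cone over) the image also vanishes. *)
Definition multiview_variety (t : corr_type) (A B C : 'M[K]_(3,4))
    (x1 x2 x3 : 'cV[K]_3) : Prop :=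
  [/\ x1 != 0, x2 != 0 & x3 != 0] /\
  forall p : {mpoly K[9]},
    (forall y1 y2 y3 : 'cV[K]_3, consistent t A B C y1 y2 y3 ->
       p.@[coords y1 y2 y3] = 0) ->
    p.@[coords x1 x2 x3] = 0.

Definition avoids (f : factor_kind) (x e : 'cV[K]_3) : Prop :=
  match f with
  | Pt => ~ pt_eq x e
  | Ln => x^T *m e != 0
  end.

Definition avoids_epipoles (t : corr_type) (A B C : 'M[K]_(3,4))
    (cA cB cC : 'cV[K]_4) (x1 x2 x3 : 'cV[K]_3) : Prop :=
  let: (f1, f2, f3) := kinds t in
  [/\ avoids f1 x1 (A *m cB) /\ avoids f1 x1 (A *m cC),
      avoids f2 x2 (B *m cA) /\ avoids f2 x2 (B *m cC) &
      avoids f3 x3 (C *m cA) /\ avoids f3 x3 (C *m cB)].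

Definition is_center (P : 'M[K]_(3,4)) (c : 'cV[K]_4) : Prop :=
  c != 0 /\ P *m c = 0.

End MultiView.

(* Main.v *)
Require Import Defs.
From HB Require Import structures.
From mathcomp Require Import all_boot all_order all_algebra.
From mathcomp Require Import reals.
From mathcomp Require Import complex.
From mathcomp Require Import mpoly.
From mathcomp Require Import ring zify.
Import Order.TTheory GRing.Theory Num.Theory.
Local Open Scope ring_scope.
Set Implicit Arguments. Unset Strict Implicit.
Definition i0 : 'I_3 := @Ordinal 3 0 isT.
Definition i1 : 'I_3 := @Ordinal 3 1 isT.
Definition i2 : 'I_3 := @Ordinal 3 2 isT.

Lemma ord3 (p : 'I_3) : p = i0 \/ p = i1 \/ p = i2.
Proof. by case: p => [[|[|[|]]] H] //; [left|right;left|right;right]; apply: val_inj. Qed.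

Lemma l1 : lift ord0 ord0 = i1 :> 'I_3. Proof. by apply: val_inj. Qed.
Lemma l2 : lift ord0 (lift ord0 ord0) = i2 :> 'I_3. Proof. by apply: val_inj. Qed.
Lemma l0 : ord0 = i0 :> 'I_3. Proof. by apply: val_inj. Qed.

Definition crossmx (R : pzRingType) (x : 'cV[R]_3) : 'M[R]_3 :=
  \matrix_(i<3,j<3) (match nat_of_ord i, nat_of_ord j with
     | 0,1 => - x i2 0 | 0,2 => x i1 0 | 1,0 => x i2 0 | 1,2 => - x i0 0
     | 2,0 => - x i1 0 | 2,1 => x i0 0 | _,_ => 0 end).

Section Cross.
Variable K : fieldType.

Lemma cross_key (x w : 'cV[K]_3) : crossmx x *m w = 0 ->
  forall p q : 'I_3, x p 0 * w q 0 = x q 0 * w p 0.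
Proof.
move=> H.
have e0 := congr1 (fun M : 'M[K]_(3,1) => M i0 0) H; have e1 := congr1 (fun M : 'M[K]_(3,1) => M i1 0) H;
have e2 := congr1 (fun M : 'M[K]_(3,1) => M i2 0) H.
rewrite /= !mxE !big_ord_recl !big_ord0 !mxE /= l1 l2 l0 in e0 e1 e2.
move=> p q; case: (ord3 p) => [->|[->|->]]; case: (ord3 q) => [->|[->|->]] //;
apply/eqP; rewrite -subr_eq0; apply/eqP;
first [rewrite -[X in _ = X]e0; ring | rewrite -[X in _ = X]e1; ring | rewrite -[X in _ = X]e2; ring
  | rewrite -[X in _ = X]oppr0 -[X in _ = - X]e0; ring
  | rewrite -[X in _ = X]oppr0 -[X in _ = - X]e1; ring
  | rewrite -[X in _ = X]oppr0 -[X in _ = - X]e2; ring].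
Qed.

Lemma nz_coord n (x : 'cV[K]_n) : x != 0 -> exists p, x p 0 != 0.
Proof.
move=> x0; apply/existsP; apply: contraR x0 => /existsPn H; apply/eqP/matrixP => i j.
by rewrite ord1 mxE; apply/eqP; move/negPn: (H i).
Qed.

Lemma cross_pt (x w : 'cV[K]_3) : x != 0 -> w != 0 -> crossmx x *m w = 0 -> pt_eq w x.
Proof.
move=> x0 w0 /cross_key key; have [p hp] := nz_coord x0.
have ew : w = (w p 0 / x p 0) *: x.
  apply/matrixP => i j; rewrite ord1 !mxE.
  by apply: (mulfI hp); rewrite key; field.
exists (w p 0 / x p 0); split => //; apply: contra_neq w0 => k0.
by rewrite ew k0 scale0r.
Qed.

Lemma pt_cross (x w : 'cV[K]_3) : pt_eq w x -> crossmx x *m w = 0.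
Proof.
move=> [k [_ ->]]; rewrite -scalemxAr; apply/eqP; rewrite scaler_eq0; apply/orP; right.
apply/eqP/matrixP => i j; rewrite ord1 !mxE !big_ord_recl !big_ord0 !mxE ?l2 ?l1 ?l0.
by case: (ord3 i) => [->|[->|->]] /=; ring.
Qed.

End Cross.
Section LinAlg.
Variable K : fieldType.

Lemma ker_nz m n (M : 'M[K]_(m,n)) : (\rank M < n)%N ->
  exists v : 'cV[K]_n, v != 0 /\ M *m v = 0.
Proof.
move=> hr.
have hk : \rank (kermx M^T) != 0%N by rewrite mxrank_ker mxrank_tr subn_eq0 -ltnNge.
have [i hi] : exists i, row i (kermx M^T) != 0.
  apply/existsP; apply: contraR hk => /existsPn H; rewrite mxrank_eq0; apply/eqP/row_matrixP => i.
  by rewrite row0; apply/eqP; move/negPn: (H i).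
exists (row i (kermx M^T))^T; split; first by rewrite trmx_eq0.
apply: trmx_inj; rewrite trmx_mul trmxK trmx0; apply/sub_kermxP.
exact: submx_trans (row_sub _ _) (submx_refl _).
Qed.

Lemma rank_of_ker m n (M : 'M[K]_(m,n)) : (forall a : 'cV[K]_n, M *m a = 0 -> a = 0) -> \rank M = n.
Proof.
move=> H; apply/eqP; rewrite eqn_leq rank_leq_col /= leqNgt; apply/negP => /ker_nz [a [a0 Ha]].
by move/eqP: a0; apply; apply: H.
Qed.

Lemma ker_of_rank m n (M : 'M[K]_(m,n)) (a : 'cV[K]_n) : \rank M = n -> M *m a = 0 -> a = 0.
Proof.
move=> hr Ha; have : row_full M by rewrite /row_full hr.
move/row_fullP => [B HB]; by rewrite -[a]mul1mx -HB -mulmxA Ha mulmx0.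
Qed.

Lemma det_rank m n (M : 'M[K]_(m,n)) : (forall N : 'M_(n,m), \det (N *m M) = 0) -> (\rank M < n)%N.
Proof.
move=> H; rewrite ltn_neqAle rank_leq_col andbT; apply/negP => /eqP hr.
have : row_full M by rewrite /row_full hr.
move/row_fullP => [B HB]; move: (H B); rewrite HB det1 => /eqP; by rewrite oner_eq0.
Qed.

Lemma det_ker m n (M : 'M[K]_(m,n)) (N : 'M_(n,m)) (v : 'cV[K]_n) : M *m v = 0 -> v != 0 -> \det (N *m M) = 0.
Proof.
move=> Hv v0; apply/eqP; apply: contraR v0 => hd.
have hu : N *m M \in unitmx by rewrite unitmxE unitfE.
by rewrite -(mulKmx hu v) -mulmxA Hv !mulmx0.
Qed.

Lemma kerP (P : 'M[K]_(3,4)) c w : \rank P = 3%N -> is_center P c -> P *m w = 0 ->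
  exists k, w = k *: c.
Proof.
move=> hr [c0 hc] hw.
have sc : (c^T <= kermx P^T)%MS by apply/sub_kermxP; rewrite -trmx_mul hc trmx0.
have sw : (w^T <= kermx P^T)%MS by apply/sub_kermxP; rewrite -trmx_mul hw trmx0.
have hk : \rank (kermx P^T) = 1%N by rewrite mxrank_ker mxrank_tr hr.
have e : (c^T == kermx P^T)%MS by rewrite -(mxrank_leqif_eq sc).2 hk rank_rV trmx_eq0 c0.
have : (w^T <= c^T)%MS by rewrite (eqmxP e).
move/sub_rVP => [k hk2]; exists k; by rewrite -[w]trmxK hk2 linearZ /= trmxK.
Qed.

End LinAlg.

Section Geo.
Variable K : fieldType.

Lemma rankPL (P : 'M[K]_(3,4)) c (h : 'rV[K]_4) (L : 'M[K]_(4,2)) :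
  \rank P = 3%N -> is_center P c -> h *m L = 0 -> h *m c != 0 -> \rank L = 2%N ->
  \rank (P *m L) = 2%N.
Proof.
move=> hr hc hL hh rL; apply: rank_of_ker => a Ha.
have hPL : P *m (L *m a) = 0 by rewrite mulmxA.
have [k hk] := kerP hr hc hPL.
have : h *m (L *m a) = 0 by rewrite mulmxA hL mul0mx.
rewrite hk -scalemxAr => /eqP; rewrite scaler_eq0 (negbTE hh) orbF => /eqP k0.
by move: hk; rewrite k0 scale0r; apply: ker_of_rank.
Qed.

Lemma mul11 n (M : 'M[K]_(n,1)) (b : 'M[K]_1) : M *m b = b 0 0 *: M.
Proof. by rewrite {1}[b]mx11_scalar mul_mx_scalar. Qed.

Lemma build_L k (X : 'cV[K]_4) (F : 'M[K]_(k,4)) : X != 0 -> F *m X = 0 ->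
  (forall j : 'I_4, exists v : 'cV[K]_4, v != 0 /\ col_mx F (delta_mx (0 : 'I_1) j) *m v = 0) ->
  exists L : 'M[K]_(4,2), [/\ \rank L = 2%N, on_line L X & F *m L = 0].
Proof.
move=> X0 FX H; have [j hj] := nz_coord X0; have [v [v0 hv]] := H j.
rewrite mul_col_mx in hv; move/eqP: hv; rewrite col_mx_eq0 => /andP [/eqP Fv /eqP dv].
have vj : v j 0 = 0 by move: (congr1 (fun M : 'M[K]_(1,1) => M 0 0) dv); rewrite -(rowE j v) !mxE.
exists (row_mx X v); split.
- apply: rank_of_ker => a Ha; pose a' : 'M[K]_(1+1,1) := a.
  have ea : a = col_mx (usubmx a') (dsubmx a') by rewrite vsubmxK.
  rewrite ea in Ha *.
  rewrite (@mul_row_col _ 4 1 1 1) !mul11 in Ha.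
  rewrite [usubmx a']mx11_scalar [dsubmx a']mx11_scalar.
  move: (usubmx a' 0 0) (dsubmx a' 0 0) Ha => u d Ha.
  have e := congr1 (fun M : 'M[K]_(4,1) => M j 0) Ha; rewrite /= !mxE vj mulr0 addr0 in e.
  move/eqP: e; rewrite mulf_eq0 (negbTE hj) orbF => /eqP e.
  move: Ha; rewrite e scale0r add0r => /eqP; rewrite scaler_eq0 (negbTE v0) orbF => /eqP e2.
  by rewrite e2 raddf0 col_mx0.
- by exists (col_mx (1%:M : 'M[K]_1) (0 : 'M[K]_1) : 'cV[K]_2); rewrite (@mul_row_col _ 4 1 1 1) mulmx1 mulmx0 addr0.
- by rewrite (@mul_mx_row _ k 4 1 1) FX Fv row_mx0.
Qed.

Lemma sep (X c : 'cV[K]_4) : X != 0 -> (forall s : 'rV[K]_4, s *m X = 0 -> s *m c = 0) ->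
  exists k, c = k *: X.
Proof.
move=> X0 H; have [p hp] := nz_coord X0; exists (c p 0 / X p 0).
apply/matrixP => i j; rewrite ord1 !mxE.
pose s : 'rV[K]_4 := X i 0 *: delta_mx 0 p - X p 0 *: delta_mx 0 i.
have sE (Y : 'cV[K]_4) : (s *m Y) 0 0 = X i 0 * Y p 0 - X p 0 * Y i 0.
  by rewrite mulmxBl -!scalemxAl -!rowE !mxE.
have : s *m c = 0.
  apply: H; apply/matrixP => a b; rewrite !ord1 sE mxE; ring.
move/(congr1 (fun M : 'M[K]_(1,1) => M 0 0)); rewrite sE mxE => /eqP; rewrite subr_eq0 => /eqP e.
apply: (mulfI hp); rewrite -e; field; exact: hp.
Qed.

Lemma dist (A B : 'M[K]_(3,4)) cA cB : \rank B = 3%N -> is_center A cA -> is_center B cB ->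
  ~ pt_eq cA cB -> B *m cA != 0.
Proof.
move=> hr hA hB hne; apply/negP => /eqP e; have [k hk] := kerP hr hB e.
apply: hne; exists k; split => //; apply: contra_neq hA.1 => k0.
by rewrite hk k0 scale0r.
Qed.

Lemma img_ptP (P : 'M[K]_(3,4)) X x : x != 0 -> P *m X != 0 ->
  crossmx x *m (P *m X) = 0 -> img_pt P X x.
Proof. by move=> x0 h0 hc; split => //; apply: cross_pt. Qed.

Lemma ker3 k (F : 'M[K]_(k,4)) : (k <= 3)%N -> exists v : 'cV[K]_4, v != 0 /\ F *m v = 0.
Proof. move=> hk; apply: ker_nz; exact: leq_ltn_trans (rank_leq_row F) _. Qed.

End Geo.

Definition linemx (R : pzRingType) (x : 'cV[R]_3) : 'M[R]_3 := delta_mx i0 (0 : 'I_1) *m x^T.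
Definition blk (R : pzRingType) (f : factor_kind) (x : 'cV[R]_3) : 'M[R]_3 :=
  match f with Pt => crossmx x | Ln => linemx x end.
Definition Nmat (R : pzRingType) f1 f2 f3 (A B C : 'M[R]_(3,4)) (x1 x2 x3 : 'cV[R]_3)
  : 'M[R]_(3 + (3 + 3), 4) :=
  col_mx (blk f1 x1 *m A) (col_mx (blk f2 x2 *m B) (blk f3 x3 *m C)).
Definition Nt (R : pzRingType) t (A B C : 'M[R]_(3,4)) (x1 x2 x3 : 'cV[R]_3) :=
  let: (f1, f2, f3) := kinds t in Nmat f1 f2 f3 A B C x1 x2 x3.

Lemma map_crossmx (R S : pzRingType) (f : {rmorphism R -> S}) x :
  map_mx f (crossmx x) = crossmx (map_mx f x).
Proof.
apply/matrixP => i j; rewrite !mxE.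
by case: i j => [[|[|[|i]]] Hi] [[|[|[|j]]] Hj] //=; rewrite ?mxE ?rmorphN ?rmorph0.
Qed.

Lemma map_linemx (R S : pzRingType) (f : {rmorphism R -> S}) x :
  map_mx f (linemx x) = linemx (map_mx f x).
Proof. by rewrite /linemx map_mxM map_delta_mx map_trmx. Qed.

Lemma map_blk (R S : pzRingType) (f : {rmorphism R -> S}) g x :
  map_mx f (blk g x) = blk g (map_mx f x).
Proof. by case: g; [apply: map_crossmx | apply: map_linemx]. Qed.

Lemma map_Nt (R S : pzRingType) (f : {rmorphism R -> S}) t A B C x1 x2 x3 :
  map_mx f (Nt t A B C x1 x2 x3) =
  Nt t (map_mx f A) (map_mx f B) (map_mx f C) (map_mx f x1) (map_mx f x2) (map_mx f x3).
Proof.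
rewrite /Nt; case: (kinds t) => [[f1 f2 f3]].
by rewrite /Nmat !map_col_mx !map_mxM !map_blk.
Qed.

Section Poly.
Variable K : fieldType.
Local Notation MP := {mpoly K[9]}.

Definition Yv (k : nat) : 'cV[MP]_3 := \col_(j < 3) 'X_(inord (3 * k + j)).
Definition CP m n (M : 'M[K]_(m,n)) : 'M[MP]_(m,n) := map_mx (fun c => c%:MP) M.

Lemma CP_eval m n (M : 'M[K]_(m,n)) v : map_mx (meval v) (CP M) = M.
Proof. by apply/matrixP => i j; rewrite !mxE mevalC. Qed.

Lemma Yv_eval (y1 y2 y3 : 'cV[K]_3) :
  [/\ map_mx (meval (coords y1 y2 y3)) (Yv 0) = y1,
      map_mx (meval (coords y1 y2 y3)) (Yv 1) = y2 &
      map_mx (meval (coords y1 y2 y3)) (Yv 2) = y3].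
Proof.
split; apply/matrixP => j l; rewrite ord1 !mxE mevalXU /coords inordK;
  case: j => [j hj] /=; try (by apply: leq_trans hj _);
  (have hm : forall k, inord ((3 * k + j) %% 3) = Ordinal hj :> 'I_3 by
     move=> k; apply: val_inj; rewrite /= mulnC modnMDl modn_small // inordK);
  rewrite ?hm //; try lia.
- by have -> : (3 * 0 + j < 3)%N = true by lia.
- by have -> : (3 * 1 + j < 6)%N = true by lia.
Qed.



End Poly.

Section Poly2.
Variable K : fieldType.
Local Notation MP := {mpoly K[9]}.

Definition polyN t (A B C : 'M[K]_(3,4)) (Q : 'M[K]_(4, 3 + (3 + 3))) : MP :=
  \det (CP Q *m Nt t (CP A) (CP B) (CP C) (Yv K 0) (Yv K 1) (Yv K 2)).
Definition polyW t (A B C : 'M[K]_(3,4)) (Q : 'M[K]_(4, 3 + (3 + 3) + 1)) (w : 'rV[K]_4) : MP :=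
  \det (CP Q *m col_mx (Nt t (CP A) (CP B) (CP C) (Yv K 0) (Yv K 1) (Yv K 2)) (CP w)).

Lemma polyN_eval t A B C Q (y1 y2 y3 : 'cV[K]_3) :
  (polyN t A B C Q).@[coords y1 y2 y3] = \det (Q *m Nt t A B C y1 y2 y3).
Proof.
rewrite /polyN -(det_map_mx (meval (coords y1 y2 y3))) map_mxM map_Nt !CP_eval.
by case: (Yv_eval y1 y2 y3) => -> -> ->.
Qed.

Lemma polyW_eval t A B C Q w (y1 y2 y3 : 'cV[K]_3) :
  (polyW t A B C Q w).@[coords y1 y2 y3] = \det (Q *m col_mx (Nt t A B C y1 y2 y3) w).
Proof.
rewrite /polyW -(det_map_mx (meval (coords y1 y2 y3))) map_mxM map_col_mx map_Nt !CP_eval.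
by case: (Yv_eval y1 y2 y3) => -> -> ->.
Qed.

Lemma line_iff (x : 'cV[K]_3) p (M : 'M[K]_(3,p)) : linemx x *m M = 0 <-> x^T *m M = 0.
Proof.
rewrite /linemx -mulmxA; split => h; last by rewrite h mulmx0.
have := congr1 (mulmx (delta_mx (0 : 'I_1) i0)) h; rewrite mulmxA mul_delta_mx mulmx0 => e.
rewrite -e -[LHS]mul1mx; congr (_ *m _); apply/matrixP => a b; by rewrite !ord1 !mxE.
Qed.

Lemma blk_zero f (P : 'M[K]_(3,4)) X L y : maps_to f P X L y -> on_line L X ->
  blk f y *m P *m X = 0.
Proof.
case: f => /=.
- by move=> [_ h] _; rewrite -mulmxA; apply: pt_cross.
- move=> [_ [_ h]] [v ->]; rewrite -mulmxA; apply/line_iff.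
  by rewrite !mulmxA -(mulmxA _ P) h mul0mx.
Qed.

Lemma cons_ker t A B C (y1 y2 y3 : 'cV[K]_3) : consistent t A B C y1 y2 y3 ->
  exists X : 'cV[K]_4, X != 0 /\ Nt t A B C y1 y2 y3 *m X = 0.
Proof.
rewrite /consistent /Nt; case: (kinds t) => [[f1 f2 f3]] [X [L [[X0 _ hl] [m1 m2 m3]]]].
exists X; split => //.
by rewrite /Nmat !mul_col_mx (blk_zero m1 hl) (blk_zero m2 hl) (blk_zero m3 hl) !col_mx0.
Qed.

Lemma mv_ker t A B C (x1 x2 x3 : 'cV[K]_3) : multiview_variety t A B C x1 x2 x3 ->
  forall Q, \det (Q *m Nt t A B C x1 x2 x3) = 0.
Proof.
move=> [_ MV] Q; have := MV (polyN t A B C Q); rewrite polyN_eval; apply => y1 y2 y3 hc.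
rewrite polyN_eval; have [X [X0 hX]] := cons_ker hc; exact: det_ker hX X0.
Qed.

Lemma img_line0 (P : 'M[K]_(3,4)) L y : img_line P L y -> linemx y *m P *m L = 0.
Proof. by move=> [_ [_ h]]; rewrite -mulmxA; apply/line_iff. Qed.

Lemma cons_ker2 A B C (y1 y2 y3 : 'cV[K]_3) : consistent LLL A B C y1 y2 y3 ->
  forall w : 'rV[K]_4, exists X : 'cV[K]_4, X != 0 /\ col_mx (Nt LLL A B C y1 y2 y3) w *m X = 0.
Proof.
rewrite /consistent /=; move=> [X [L [[X0 rL hl] [m1 m2 m3]]]] w.
have NL : Nt LLL A B C y1 y2 y3 *m L = 0.
  by rewrite /Nt /= /Nmat !mul_col_mx !img_line0 // !col_mx0.
have [a [a0 ha]] : exists a : 'cV[K]_2, a != 0 /\ (w *m L) *m a = 0.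
  by apply: ker_nz; exact: leq_ltn_trans (rank_leq_row _) _.
exists (L *m a); split.
- by apply: contra a0 => /eqP e; apply/eqP; exact: ker_of_rank rL e.
- by rewrite mul_col_mx !mulmxA NL mul0mx ha col_mx0.
Qed.

Lemma mv_ker2 A B C (x1 x2 x3 : 'cV[K]_3) : multiview_variety LLL A B C x1 x2 x3 ->
  forall Q (w : 'rV[K]_4), \det (Q *m col_mx (Nt LLL A B C x1 x2 x3) w) = 0.
Proof.
move=> [_ MV] Q w; have := MV (polyW LLL A B C Q w); rewrite polyW_eval; apply => y1 y2 y3 hc.
rewrite polyW_eval; have [X [X0 hX]] := cons_ker2 hc w; exact: det_ker hX X0.
Qed.

End Poly2.

Section Main.
Variable K : fieldType.

Lemma pt_sym n (a b : 'cV[K]_n) : pt_eq a b -> pt_eq b a.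
Proof.
move=> [k [k0 e]]; exists k^-1; split; first by rewrite invr_eq0.
by rewrite e scalerA mulVf // scale1r.
Qed.

Lemma inker (P : 'M[K]_(3,4)) c X : \rank P = 3%N -> is_center P c -> X != 0 -> P *m X = 0 ->
  exists k, k != 0 /\ X = k *: c.
Proof.
move=> hr hc X0 e; have [k hk] := kerP hr hc e; exists k; split => //.
by apply: contra_neq X0 => k0; rewrite hk k0 scale0r.
Qed.

Lemma pt_move (P : 'M[K]_(3,4)) X x c k : pt_eq (P *m X) x -> c = k *: X -> k != 0 ->
  pt_eq x (P *m c).
Proof.
move=> [m [m0 e]] ec k0; exists (k * m)^-1; split; first by rewrite invr_eq0 mulf_neq0.
by rewrite ec -scalemxAr e scalerA scalerA -mulrA mulVf ?mulf_neq0 // scale1r.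
Qed.

Lemma no_center (P : 'M[K]_(3,4)) x X c k : x != 0 -> X = k *: c -> k != 0 -> P *m c != 0 ->
  crossmx x *m (P *m X) = 0 -> pt_eq x (P *m c).
Proof.
move=> x0 hX k0 Pc hc; apply: (pt_move (X := X) (k := k^-1)).
- apply: cross_pt => //; by rewrite hX -scalemxAr scaler_eq0 negb_or k0.
- by rewrite hX scalerA mulVf // scale1r.
- by rewrite invr_eq0.
Qed.

Lemma no_center_ln (P : 'M[K]_(3,4)) (x : 'cV[K]_3) (X c : 'cV[K]_4) k : X = k *: c -> k != 0 ->
  linemx x *m P *m X = 0 -> x^T *m (P *m c) != 0 -> False.
Proof.
move=> hX k0 h hc; move: h; rewrite -mulmxA => /line_iff.
rewrite hX -!scalemxAr => /eqP; rewrite scaler_eq0 (negbTE k0) /=; exact/negP.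
Qed.

Lemma sep2 (X c : 'cV[K]_4) : X != 0 -> (forall k, c != k *: X) ->
  exists s : 'rV[K]_4, s *m X = 0 /\ s *m c != 0.
Proof.
move=> X0 H; have [p hp] := nz_coord X0.
have : c - (c p 0 / X p 0) *: X != 0 by rewrite subr_eq0; apply: H.
move/nz_coord => [i hi]; rewrite !mxE in hi.
pose s : 'rV[K]_4 := X i 0 *: delta_mx 0 p - X p 0 *: delta_mx 0 i.
have sE (Y : 'cV[K]_4) : (s *m Y) 0 0 = X i 0 * Y p 0 - X p 0 * Y i 0.
  by rewrite mulmxBl -!scalemxAl -!rowE !mxE.
exists s; split.
- apply/matrixP => a b; rewrite !ord1 sE mxE; ring.
- apply/negP => /eqP /(congr1 (fun M : 'M[K]_(1,1) => M 0 0)); rewrite sE mxE => /eqP.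
  rewrite subr_eq0 => /eqP e; move/eqP: hi; apply; apply: (mulfI hp).
  rewrite mulrBr mulr0 -e; field; exact: hp.
Qed.

Lemma img_lineP (P : 'M[K]_(3,4)) c x L (h : 'rV[K]_4) : \rank P = 3%N -> is_center P c ->
  x != 0 -> x^T *m P *m L = 0 -> h *m L = 0 -> h *m c != 0 -> \rank L = 2%N ->
  img_line P L x.
Proof.
move=> hr hc x0 xL hL hh rL; split; first exact: rankPL hr hc hL hh rL.
by split => //; rewrite mulmxA.
Qed.

Lemma lineT (P : 'M[K]_(3,4)) x p (M : 'M[K]_(4,p)) : linemx x *m P *m M = 0 -> x^T *m P *m M = 0.
Proof. move=> h; rewrite -mulmxA; apply/line_iff; by rewrite mulmxA. Qed.

End Main.

Section MainThm.
Variable K : fieldType.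

Lemma main_gen (t : corr_type) (A B C : 'M[K]_(3,4)) (cA cB cC : 'cV[K]_4)
    (x1 x2 x3 : 'cV[K]_3) :
  \rank A = 3%N -> \rank B = 3%N -> \rank C = 3%N ->
  is_center A cA -> is_center B cB -> is_center C cC ->
  ~ pt_eq cA cB -> ~ pt_eq cA cC -> ~ pt_eq cB cC ->
  avoids_epipoles t A B C cA cB cC x1 x2 x3 ->
  multiview_variety t A B C x1 x2 x3 ->
  consistent t A B C x1 x2 x3.
Proof.
move=> rA rB rC hA hB hC dAB dAC dBC av MV.
have [[x10 x20 x30] _] := MV.
have dBA : ~ pt_eq cB cA by move/pt_sym.
have dCA : ~ pt_eq cC cA by move/pt_sym.
have dCB : ~ pt_eq cC cB by move/pt_sym.
have BcA := dist rB hA hB dAB; have CcA := dist rC hA hC dAC.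
have AcB := dist rA hB hA dBA; have CcB := dist rC hB hC dBC.
have AcC := dist rA hC hA dCA; have BcC := dist rB hC hB dCB.
case: t av MV => /= av MV; rewrite /consistent /=.
all: move: av => [[a11 a12] [a21 a22] [a31 a32]].
all: rewrite /avoids in a11 a12 a21 a22 a31 a32.
- have [X [X0 hX]] := ker_nz (det_rank (mv_ker MV)).
  move: hX; rewrite /Nt /= /Nmat !mul_col_mx => /eqP; rewrite !col_mx_eq0.
  move=> /andP [/eqP h1 /andP [/eqP h2 /eqP h3]].
  rewrite -mulmxA in h1; have r2X := lineT h2; have r3X := lineT h3.
  have AX : A *m X != 0.
    apply/negP => /eqP e; have [k [k0 hk]] := inker rA hA X0 e.
    exact: no_center_ln hk k0 h2 a21.
  pose F := col_mx (x2^T *m B) (x3^T *m C).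
  have FX : F *m X = 0 by rewrite mul_col_mx r2X r3X col_mx0.
  have [L [rL hl FL]] := build_L X0 FX (fun j => ker3 (col_mx F (delta_mx (0:'I_1) j)) isT).
  move: FL; rewrite mul_col_mx => /eqP; rewrite col_mx_eq0 => /andP [/eqP r2L /eqP r3L].
  exists X, L; split; first by split.
  split; first exact: img_ptP.
  + by apply: (img_lineP rB hB x20 r2L r3L _ rL); rewrite -mulmxA.
  + by apply: (img_lineP rC hC x30 r3L r2L _ rL); rewrite -mulmxA.
- have [X [X0 hX]] := ker_nz (det_rank (fun Q => mv_ker2 MV Q 0)).
  move: hX; rewrite mul_col_mx => /eqP; rewrite col_mx_eq0 => /andP [/eqP NX _].
  have [L [rL hl NL]] := build_L X0 NX
     (fun j => ker_nz (det_rank (fun Q => mv_ker2 MV Q (delta_mx (0:'I_1) j)))).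
  move: NL; rewrite /Nt /= /Nmat !mul_col_mx => /eqP; rewrite !col_mx_eq0.
  move=> /andP [/eqP h1 /andP [/eqP h2 /eqP h3]].
  have r1L := lineT h1; have r2L := lineT h2; have r3L := lineT h3.
  exists X, L; split; first by split.
  split.
  + by apply: (img_lineP rA hA x10 r1L r2L _ rL); rewrite -mulmxA.
  + by apply: (img_lineP rB hB x20 r2L r1L _ rL); rewrite -mulmxA.
  + by apply: (img_lineP rC hC x30 r3L r1L _ rL); rewrite -mulmxA.
- have [X [X0 hX]] := ker_nz (det_rank (mv_ker MV)).
  move: hX; rewrite /Nt /= /Nmat !mul_col_mx => /eqP; rewrite !col_mx_eq0.
  move=> /andP [/eqP h1 /andP [/eqP h2 /eqP h3]].
  rewrite -mulmxA in h1; rewrite -mulmxA in h2; have r3X := lineT h3.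
  have AX : A *m X != 0.
    apply/negP => /eqP e; have [k [k0 hk]] := inker rA hA X0 e.
    exact: a21 (no_center x20 hk k0 BcA h2).
  have BX : B *m X != 0.
    apply/negP => /eqP e; have [k [k0 hk]] := inker rB hB X0 e.
    exact: a11 (no_center x10 hk k0 AcB h1).
  have ns : forall k, cC != k *: X.
    move=> k; apply/eqP => e; have k0 : k != 0 by apply: contra_neq hC.1 => k0; rewrite e k0 scale0r.
    exact: a12 (pt_move (cross_pt x10 AX h1) e k0).
  have [s [sX sc]] := sep2 X0 ns.
  pose F := col_mx (x3^T *m C) s.
  have FX : F *m X = 0 by rewrite mul_col_mx r3X sX col_mx0.
  have [L [rL hl FL]] := build_L X0 FX (fun j => ker3 (col_mx F (delta_mx (0:'I_1) j)) isT).
  move: FL; rewrite mul_col_mx => /eqP; rewrite col_mx_eq0 => /andP [/eqP r3L /eqP sL].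
  exists X, L; split; first by split.
  split; [exact: img_ptP | exact: img_ptP | ].
  exact: (img_lineP rC hC x30 r3L sL sc rL).
- have [X [X0 hX]] := ker_nz (det_rank (mv_ker MV)).
  move: hX; rewrite /Nt /= /Nmat !mul_col_mx => /eqP; rewrite !col_mx_eq0.
  move=> /andP [/eqP h1 /andP [/eqP h2 /eqP h3]].
  rewrite -mulmxA in h1; rewrite -mulmxA in h3; have r2X := lineT h2.
  have AX : A *m X != 0.
    apply/negP => /eqP e; have [k [k0 hk]] := inker rA hA X0 e.
    exact: no_center_ln hk k0 h2 a21.
  have CX : C *m X != 0.
    apply/negP => /eqP e; have [k [k0 hk]] := inker rC hC X0 e.
    exact: no_center_ln hk k0 h2 a22.
  have ns : forall k, cB != k *: X.
    move=> k; apply/eqP => e; have k0 : k != 0 by apply: contra_neq hB.1 => k0; rewrite e k0 scale0r.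
    exact: a11 (pt_move (cross_pt x10 AX h1) e k0).
  have [s [sX sc]] := sep2 X0 ns.
  pose F := col_mx (x2^T *m B) s.
  have FX : F *m X = 0 by rewrite mul_col_mx r2X sX col_mx0.
  have [L [rL hl FL]] := build_L X0 FX (fun j => ker3 (col_mx F (delta_mx (0:'I_1) j)) isT).
  move: FL; rewrite mul_col_mx => /eqP; rewrite col_mx_eq0 => /andP [/eqP r2L /eqP sL].
  exists X, L; split; first by split.
  split; [exact: img_ptP | | exact: img_ptP].
  exact: (img_lineP rB hB x20 r2L sL sc rL).
- have [X [X0 hX]] := ker_nz (det_rank (mv_ker MV)).
  move: hX; rewrite /Nt /= /Nmat !mul_col_mx => /eqP; rewrite !col_mx_eq0.
  move=> /andP [/eqP h1 /andP [/eqP h2 /eqP h3]].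
  rewrite -mulmxA in h1; rewrite -mulmxA in h2; rewrite -mulmxA in h3.
  have AX : A *m X != 0.
    apply/negP => /eqP e; have [k [k0 hk]] := inker rA hA X0 e.
    exact: a21 (no_center x20 hk k0 BcA h2).
  have BX : B *m X != 0.
    apply/negP => /eqP e; have [k [k0 hk]] := inker rB hB X0 e.
    exact: a11 (no_center x10 hk k0 AcB h1).
  have CX : C *m X != 0.
    apply/negP => /eqP e; have [k [k0 hk]] := inker rC hC X0 e.
    exact: a12 (no_center x10 hk k0 AcC h1).
  pose F := (0 : 'M[K]_(1,4)).
  have FX : F *m X = 0 by rewrite mul0mx.
  have [L [rL hl _]] := build_L X0 FX (fun j => ker3 (col_mx F (delta_mx (0:'I_1) j)) isT).
  exists X, L; split; first by split.
  by split; exact: img_ptP.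
Qed.
End MainThm.

Theorem lemma3p5 (R : realType) (t : corr_type)
    (A B C : 'M[R[i]]_(3,4)) (cA cB cC : 'cV[R[i]]_4)
    (x1 x2 x3 : 'cV[R[i]]_3) :
  \rank A = 3%N -> \rank B = 3%N -> \rank C = 3%N ->
  is_center A cA -> is_center B cB -> is_center C cC ->
  ~ pt_eq cA cB -> ~ pt_eq cA cC -> ~ pt_eq cB cC ->
  avoids_epipoles t A B C cA cB cC x1 x2 x3 ->
  multiview_variety t A B C x1 x2 x3 ->
  consistent t A B C x1 x2 x3.
Proof. exact: main_gen. Qed.
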